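(* Fix a nonabelian finite simple group $S$, a positive integer $t$ and a prime $p$, and set $N=S^t$. Assume that every coset of $S$ in $\mathrm{Aut}(S)$ contains an $S$-conjugacy class of $p$-elements of size at least $M$. Then $f_p(N)\ge M^t$.
   Context: For a subset $X$ of a finite group, $\mathrm{Ord}(X,p)$ is the set of elements of $X$ of $p$-power order. For $N=S^t$ with $S$ nonabelian simple, $f_p(N)=\min\{|\mathrm{Ord}(N\alpha,p)| : \alpha \in \mathrm{Aut}(N) \text{ a } p\text{-element}\}$, where $N$ is identified with $\mathrm{Inn}(N)\le\mathrm{Aut}(N)$ and $S$ with $\mathrm{Inn}(S)\le\mathrm{Aut}(S)$. *)

(* Defs.v *)
From mathcomp Require Import all_boot all_fingroup all_solvable.
Set Implicit Arguments. Unset Strict Implicit. Unset Printing Implicit Defensive.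
Local Open Scope group_scope.

Definition Inn (gT : finGroupType) (G : {group gT}) : {set {perm gT}} :=
  [set conj_aut G x | x in G].

Definition Ord (T : finGroupType) (X : {set T}) (p : nat) : {set T} :=
  [set x in X | p.-elt x].

(* The default value #|Inn N| of the min is harmless: every term is
   bounded by the size of the coset Inn(N) alpha, i.e. by #|Inn N|, and the
   index set is nonempty (alpha = 1). *)
Definition f_p (gT : finGroupType) (N : {group gT}) (p : nat) : nat :=
  \big[minn/#|Inn N|]_(a in Aut N | p.-elt a) #|Ord (Inn N :* a) p|.

(* Main.v *)
Require Import Defs.
From mathcomp Require Import all_boot all_fingroup all_solvable.
Set Implicit Arguments. Unset Strict Implicit. Unset Printing Implicit Defensive.
Local Open Scope group_scope.

Section Gen.
Variable gT : finGroupType.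
Implicit Types G H : {group gT}.

Lemma conj_aut_Aut G x y : x \in Aut G -> y \in G ->
  conj_aut G y ^ x = conj_aut G (x y).
Proof.
move=> AutGx Gy.
have Ax1 : x^-1 \in Aut G by rewrite groupV.
apply: (eq_Aut (A := G)).
- by rewrite groupJ // Aut_aut.
- exact: Aut_aut.
move=> z Gz; rewrite conjgE !permM.
have Gz1 : x^-1 z \in G by apply: Aut_closed.
rewrite conj_autE // conj_autE ?Aut_closed //.
rewrite -(autmE AutGx) morphJ //= autmE -permM mulVg perm1 //.
Qed.

Lemma Inn_morphim G : Inn G = conj_aut G @* G.
Proof. by rewrite morphimEsub ?normG. Qed.

Lemma center_triv_injm G : 'Z(G) = 1 -> 'injm (conj_aut G).
Proof. Abort.

End Gen.

Section Gen2.
Variable gT : finGroupType.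
Implicit Types G H : {group gT}.

Lemma conj_aut_inj G : 'Z(G) = 1 -> {in G &, injective (conj_aut G)}.
Proof.
move=> ZG y z Gy Gz eq_yz.
have nGy : y \in 'N(G) by apply: (subsetP (normG G)).
have nGz : z \in 'N(G) by apply: (subsetP (normG G)).
have : y * z^-1 \in 'ker (conj_aut G).
  apply/kerP; first by rewrite groupM ?groupV.
  rewrite morphM ?groupV //= morphV //= eq_yz -morphV //= -morphM ?groupV //.
  by rewrite mulgV morph1.
rewrite ker_conj_aut => cGyz.
have : y * z^-1 \in 'Z(G) by rewrite inE groupM ?groupV.
by rewrite ZG => /set1P /eqP; rewrite mulg_eq1 invgK => /eqP.
Qed.

Lemma commute_conjE (T : finGroupType) (x c : T) : commute c x <-> c ^ x = c.
Proof.
split=> [cx | cx].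
- by apply/conjg_fixP/commgP.
- by apply/commgP/conjg_fixP.
Qed.

Lemma class_fix G (x : {perm gT}) : 'Z(G) = 1 -> x \in Aut G ->
  (#|x ^: Inn G| * #|[set y in G | x y == y]|)%N = #|G|.
Proof.
move=> ZG AutGx.
have injc := conj_aut_inj ZG.
rewrite Inn_morphim -index_cent1.
set I := (conj_aut G @* G)%G.
have cardI : #|I| = #|G|.
  by rewrite /= morphimEsub ?normG // card_in_imset.
have defC : 'C_I[x] = conj_aut G @: [set y in G | x y == y].
  apply/setP=> c; rewrite inE /= morphimEsub ?normG //.
  apply/andP/imsetP=> [[/imsetP[y Gy ->] cx] | [y]].
    move/cent1P: cx => cx; have := iffLR (commute_conjE _ _) cx.
    rewrite conj_aut_Aut // => /injc eqy; exists y => //; have Gxy := Aut_closed AutGx Gy.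
    by rewrite inE Gy (eqy Gxy Gy) eqxx.
  rewrite inE => /andP[Gy /eqP fixy] ->; split; first exact: imset_f.
  by apply/cent1P; apply/(iffRL (commute_conjE _ _)); rewrite conj_aut_Aut // fixy.
have cardC : #|'C_I[x]| = #|[set y in G | x y == y]|.
  rewrite defC card_in_imset //; apply: sub_in2 injc => y; rewrite inE.
  by case/andP.
rewrite -cardC -cardI mulnC Lagrange //; exact: subsetIl.
Qed.

End Gen2.
Section Prod.
Variables (hT : finGroupType) (t : nat) (N : {group hT}) (T : 'I_t -> {group hT}).
Hypothesis defN : \big[dprod/1]_(i < t) T i = N.
Hypothesis ZT : forall i, 'Z(T i) = 1.
Hypothesis ntT : forall i, T i :!=: 1.

Definition K i := <<\bigcup_(j | j != i) T j>>%G.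

Lemma defK i : T i \x K i = N.
Proof.
move: defN; rewrite (bigD1 i) //=.
set B := \big[dprod/1]_(j | j != i) T j => defTB.
have [[A H eA eB] _ _ _] := dprodP defTB.
by rewrite /K /= (bigdprodWY eB) -eB.
Qed.

Lemma nsTN i : T i <| N. Proof. by case: (dprod_normal2 (defK i)). Qed.
Lemma sTN i : T i \subset N. Proof. exact: normal_sub (nsTN i). Qed.
Lemma cKT i : K i \subset 'C(T i). Proof. by case/dprodP: (defK i). Qed.
Lemma tiTK i : T i :&: K i = 1. Proof. by case/dprodP: (defK i). Qed.
Lemma mulTK i : T i * K i = N. Proof. by case/dprodP: (defK i). Qed.
Lemma sKN i : K i \subset N.
Proof. by rewrite -(mulTK i) mulG_subr. Qed.
Lemma sTK i j : j != i -> T j \subset K i.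
Proof. by move=> nji; rewrite /K /= sub_gen // (bigcup_sup j). Qed.

Lemma ZN : 'Z(N) = 1.
Proof.
rewrite -(center_bigdprod defN) big1 // => i _; exact: ZT.
Qed.

Lemma T_inj : injective T.
Proof.
move=> i j eqT; apply/eqP; apply: contraT => nij.
have : T i \subset T i :&: K i.
  by rewrite subsetI subxx eqT sTK // eq_sym.
by rewrite tiTK => TT; have := ntT i; rewrite (trivgP TT) eqxx.
Qed.

Definition proj i := divgr (T i) (K i).

Lemma projT i x : x \in N -> proj i x \in T i.
Proof. by rewrite -(mulTK i); apply: mem_divgr. Qed.

Lemma remK i x : x \in N -> remgr (T i) (K i) x \in K i.
Proof. by rewrite -(mulTK i); apply: mem_remgr. Qed.

Lemma projM i : {in N &, {morph proj i : x y / x * y}}.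
Proof.
have cpl : K i \in [complements to T i in N].
  by apply/complP; split; [rewrite tiTK | rewrite mulTK].
exact: (divgrM cpl (cKT i)).
Qed.

Canonical proj_morphism i := Morphism (projM i).

Lemma projMid i x y : x \in T i -> y \in K i -> proj i (x * y) = x.
Proof. by move=> Tx Ky; apply: divgrMid => //; apply: tiTK. Qed.

Lemma proj_inj x y : x \in N -> y \in N -> (forall i, proj i x = proj i y) -> x = y.
Proof.
move=> Nx Ny eqp.
have Nu : x * y^-1 \in N by rewrite groupM ?groupV.
suff : x * y^-1 \in 'Z(N) by rewrite ZN => /set1P/eqP; rewrite mulg_eq1 invgK => /eqP.
rewrite inE Nu -(bigdprodWY defN) cent_gen; apply/centP => z /bigcupP[i _ Tz].
have : proj i (x * y^-1) = 1.
  by rewrite (morphM (proj_morphism i)) ?groupV //= (morphV (proj_morphism i)) //= eqp mulgV.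
move=> pu; have := divgr_eq (T i) (K i) (x * y^-1); rewrite -/(proj i) pu mul1g => ->.
have := centP (subsetP (cKT i) _ (remK i Nu)) z Tz. by [].
Qed.


Hypothesis simT : forall i, simple (T i).

Lemma centN_sub (H : {set hT}) : (forall j, H \subset 'C(T j)) -> H \subset 'C(N).
Proof.
move=> cHT; rewrite -(bigdprodWY defN) cent_gen.
apply/subsetP=> x Hx; apply/centP => z /bigcupP[j _ Tz].
exact: (centP (subsetP (cHT j) x Hx)).
Qed.

Lemma aut_perm h i : h \in Aut N -> exists j, h @: T i = T j.
Proof.
move=> AutNh; set f := autm AutNh.
have eH : f @* T i = h @: T i by rewrite morphimEsub ?sTN.
set H := (f @* T i)%G.
have nsH : H <| N by have := morphim_normal f (nsTN i); rewrite im_autm.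
have simH : simple H.
  by rewrite -(isog_simple (sub_isog (sTN i) (injm_autm AutNh))) simT.
case/simpleP: (simH) => ntH simH'.
case: (boolP [exists j : 'I_t, H :&: T j != 1]) => [/existsP[j ntHj] | /existsPn allt].
  have nsHTj : H :&: T j <| T j.
    exact: normalS (subsetIr _ _) (sTN j) (normalI nsH (nsTN j)).
  case/simpleP: (simT j) => ntTj simTj.
  case: (simTj _ nsHTj) => [e1 | eTj]; first by rewrite e1 eqxx in ntHj.
  have sTjH : T j \subset H by rewrite -eTj subsetIl.
  have nsTjH : T j <| H := normalS sTjH (normal_sub nsH) (nsTN j).
  case: (simH' _ nsTjH) => [e1 | eTjH]; first by rewrite e1 eqxx in ntTj.
  by exists j; rewrite -eH; apply/esym.
exfalso; case/negP: ntH.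
have cHN : H \subset 'C(N).
  apply: centN_sub => j; apply/commG1P.
  have /negPn/eqP HT1 := allt j.
  apply/trivgP; rewrite -HT1; apply: commg_subI.
    by rewrite subsetI subxx (subset_trans (normal_sub nsH)) ?normal_norm ?nsTN.
  by rewrite subsetI subxx (subset_trans (sTN j)) ?normal_norm.
have : H \subset 'Z(N) by rewrite subsetI cHN normal_sub.
by rewrite ZN => /trivgP ->.
Qed.

Definition pi_of (h : {perm hT}) i := odflt i [pick j | h @: T i == T j].

Lemma pi_ofP h i : h \in Aut N -> h @: T i = T (pi_of h i).
Proof.
move=> AutNh; rewrite /pi_of; case: pickP => [j /eqP // | none].
by have [j ej] := aut_perm i AutNh; have := none j; rewrite ej eqxx.
Qed.

Lemma pi_of_inj h : h \in Aut N -> injective (pi_of h).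
Proof.
move=> AutNh i j eij; apply: T_inj; apply: val_inj => /=.
have e : h @: T i = h @: T j by rewrite !pi_ofP // eij.
have := congr1 (fun X : {set hT} => h^-1 @: X) e => /=.
by rewrite -!imset_comp !(eq_imset _ (permK h)) !imset_id.
Qed.


Section AutAct.
Variables (h : {perm hT}) (sg : 'I_t -> 'I_t).
Hypotheses (AutNh : h \in Aut N) (sg_inj : injective sg)
  (hT_ : forall k, h @: T k = T (sg k)).

Lemma iter_img n i : (h ^+ n) @: T i = T (iter n sg i).
Proof.
elim: n => [|n IH]; first by rewrite expg0 (eq_imset _ (@perm1 _)) imset_id.
rewrite expgSr /= (eq_imset _ (permM _ _)) imset_comp IH.
by rewrite hT_.
Qed.

Lemma hK j r : r \in K j -> h r \in K (sg j).
Proof.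
have : K j \subset (autm AutNh) @*^-1 (K (sg j)).
  rewrite gen_subG; apply/bigcupsP => l nlj; apply/subsetP => u Tu.
  apply/morphpreP; split; first exact: (subsetP (sTN l)).
  change (h u \in K (sg j)); apply: (subsetP (sTK (i := sg j) (j := sg l) _)).
    by rewrite (inj_eq sg_inj).
  by rewrite -hT_ imset_f.
by move/subsetP => sub /sub /morphpreP[_].
Qed.

Lemma proj_aut j y : y \in N -> proj (sg j) (h y) = h (proj j y).
Proof.
move=> Ny; rewrite {1}(divgr_eq (T j) (K j) y) -/(proj j y).
have N1 : proj j y \in N by apply: (subsetP (sTN j)); apply: projT.
have N2 : remgr (T j) (K j) y \in N by apply: (subsetP (sKN j)); apply: remK.
rewrite -(autmE AutNh) morphM //= autmE projMid //; first by rewrite -hT_ imset_f ?projT.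
by apply: hK; apply: remK.
Qed.

End AutAct.

End Prod.
Lemma order_dvd_iter (T0 : finType) (f : T0 -> T0) x n :
  injective f -> iter n f x = x -> fingraph.order f x %| n.
Proof.
move=> injf fx.
have io : forall q, iter (q * fingraph.order f x) f x = x.
  elim=> [|q IH] //; by rewrite mulSn iterD IH iter_order.
move: fx; rewrite {1}(divn_eq n (fingraph.order f x)) addnC iterD io => fx.
have := findex_iter (ltn_pmod n (fingraph.order_gt0 f x)); rewrite fx findex0.
by move=> e; rewrite /dvdn -e.
Qed.

Lemma simple_Z1 (gT : finGroupType) (G : {group gT}) :
  simple G -> ~~ abelian G -> 'Z(G) = 1.
Proof.
case/simpleP=> _ simG nab; case: (simG _ (center_normal G)) => // eZ.
by case/negP: nab; rewrite -eZ center_abelian.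
Qed.

Section Main.
Variables (gT hT : finGroupType) (S : {group gT}) (t p M : nat)
  (N : {group hT}) (T : 'I_t -> {group hT}).
Hypotheses (simS : simple S) (nabS : ~~ abelian S) (pr_p : prime p)
  (defN : \big[dprod/1]_(i < t) T i = N) (isoT : forall i, T i \isog S)
  (hyp : forall b, b \in Aut S ->
     exists2 x, x \in Inn S :* b & p.-elt x && (M <= #|x ^: Inn S|)).

Lemma simT i : simple (T i). Proof. by rewrite (isog_simple (isoT i)). Qed.
Lemma nabT i : ~~ abelian (T i). Proof. by rewrite (isog_abelian (isoT i)). Qed.
Lemma ZT i : 'Z(T i) = 1. Proof. exact: simple_Z1 (simT i) (nabT i). Qed.
Lemma ntT i : T i :!=: 1. Proof. by case/simpleP: (simT i). Qed.
Lemma ZS : 'Z(S) = 1. Proof. exact: simple_Z1. Qed.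

Variable a : {perm hT}.
Hypotheses (AutNa : a \in Aut N) (pa : p.-elt a).

Definition pi := pi_of T a.
Lemma pi_inj : injective pi.
Proof. exact: (pi_of_inj defN ZT ntT simT AutNa). Qed.
Lemma aT k : a @: T k = T (pi k).
Proof. exact: (pi_ofP defN ZT simT k AutNa). Qed.

Definition m i := fingraph.order pi i.
Definition q := ((#|Aut S|)`_p)%N.
Definition F i z u := (a ^+ m i) (u ^ z).
Definition P i z := [&& z \in T i, [forall u in T i, iter q (F i z) u == u]
   & (M * #|[set u in T i | F i z u == u]| <= #|S|)%N].

Lemma amT i : (a ^+ m i) @: T i = T i.
Proof. by rewrite (iter_img aT) iter_order //; apply: pi_inj. Qed.

Lemma exP i : exists z, P i z.
Proof.
have /isogP[phi injphi imphi] : S \isog T i by rewrite isog_sym.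
set beta := a ^+ m i.
have Abeta : beta \in Aut N by rewrite groupX.
have betaT u : u \in T i -> beta u \in T i by move=> Tu; have := amT i; rewrite -/beta => <-; rewrite imset_f.
pose fb s := invm injphi (beta (phi s)).
have phiS s : s \in S -> phi s \in T i by move=> Ss; rewrite -imphi mem_morphim.
have fbS s : s \in S -> fb s \in S.
  move=> Ss; have : beta (phi s) \in phi @* S by rewrite imphi betaT ?phiS.
  by case/morphimP => s' _ Ss' e; rewrite /fb e invmE.
have phifb s : s \in S -> phi (fb s) = beta (phi s).
  by move=> Ss; rewrite /fb invmK // imphi betaT ?phiS.
have injfb : {in S &, injective fb}.
  move=> s1 s2 S1 S2 e; apply: (injmP injphi) => //.
  by apply: (@perm_inj _ beta); rewrite -!phifb // e.
have subfb : fb @: S \subset S by apply/subsetP => _ /imsetP[s Ss ->]; apply: fbS.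
pose b := perm_in injfb subfb.
have bE : {in S, b =1 fb} := perm_inE injfb subfb.
have Ab : b \in Aut S.
  rewrite inE perm_in_on /=; apply/morphicP => s1 s2 S1 S2.
  have S12 : s1 * s2 \in S by rewrite groupM.
  rewrite !bE //; apply: (injmP injphi); rewrite ?groupM ?fbS //.
  rewrite morphM ?fbS // !phifb // morphM //.
  rewrite -(autmE Abeta) morphM //; apply: (subsetP (sTN defN i)); exact: phiS.
have [x xIb /andP[px Mx]] := hyp Ab.
case/rcosetP: xIb => c /imsetP[s0 Ss0 ->] ex.
exists (phi s0).
have Ax : x \in Aut S by rewrite ex groupM ?Aut_aut.
have xrel s : s \in S -> phi (x s) = F i (phi s0) (phi s).
  by move=> Ss; rewrite ex permM conj_autE // bE ?groupJ // phifb ?groupJ // morphJ.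
have xS s : s \in S -> x s \in S by move=> Ss; apply: Aut_closed.
have itrel k s : s \in S -> phi (iter k x s) = iter k (F i (phi s0)) (phi s).
  move=> Ss; elim: k => // k IH.
  have Sk : iter k x s \in S by elim: k {IH} => //= k IH; apply: xS.
  by rewrite iterS xrel // IH.
have xq : x ^+ q = 1.
  apply/eqP; rewrite -order_dvdn /q -(part_pnat_id px).
  by apply: partn_dvd; [apply: cardG_gt0 | apply: order_dvdG].
apply/and3P; split; first exact: phiS.
  apply/forallP => u; apply/implyP; rewrite -imphi => /morphimP[s _ Ss ->].
  by rewrite -itrel // -permX xq perm1.
have eFix : [set u in T i | F i (phi s0) u == u] = phi @: [set s in S | x s == s].
  apply/setP => u; apply/idP/imsetP.
    rewrite inE -imphi => /andP[/morphimP[s _ Ss ->] /eqP Fu].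
    exists s => //; rewrite inE Ss; apply/eqP; apply: (injmP injphi); rewrite ?xS //.
    by rewrite xrel.
  case => s; move=> /setIdP[Ss /eqP xs] ->; apply/setIdP; split; [exact: phiS | rewrite -xrel // xs eqxx].
  by [].
rewrite eFix card_in_imset; last first.
  by move=> s1 s2; rewrite !inE => /andP[S1 _] /andP[S2 _]; apply: (injmP injphi).
rewrite -(class_fix ZS Ax) leq_mul2r Mx orbT //.
Qed.


Definition nn i := odflt 1 [pick z | P i z].
Lemma nnP i : P i (nn i).
Proof.
rewrite /nn; case: pickP => [z //|none].
by have [z Pz] := exP i; rewrite none in Pz.
Qed.
Lemma nnT i : nn i \in T i. Proof. by case/and3P: (nnP i). Qed.

Definition base i := froot pi i == i.
Definition c i := if base i then nn i else 1.
Definition n := \prod_(i < t) c i.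

Lemma cT i : c i \in T i. Proof. by rewrite /c; case: ifP => _; rewrite ?nnT ?group1. Qed.
Lemma nN : n \in N.
Proof. by apply: group_prod => i _; apply: (subsetP (sTN defN i)); apply: cT. Qed.

Lemma proj_n j : proj T j n = c j.
Proof.
rewrite /n (morph_prod (proj_morphism defN j)); last first.
  by move=> i _; apply: (subsetP (sTN defN i)); apply: cT.
rewrite (eq_bigr (fun i => if i == j then c j else 1)).
  by rewrite -big_mkcond big_pred1_eq.
move=> i _ /=; case: eqP => [-> | /eqP nij].
  by rewrite -{1}[c j]mulg1 (projMid defN) ?cT ?group1.
rewrite -[c i]mul1g (projMid defN) ?group1 //.
  by apply: (subsetP (sTK T nij)); exact: cT.
Qed.

Lemma conj_n j u : u \in T j -> u ^ n = u ^ c j.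
Proof.
move=> Tu; rewrite {1}(divgr_eq (T j) (K T j) n) -/(proj T j n) proj_n conjgM.
have Kr : remgr (T j) (K T j) n \in K T j by apply: (remK defN j nN).
apply/(iffLR (commute_conjE _ _)); apply: commute_sym.
by apply: (centsP (cKT defN j)) => //; rewrite groupJ ?cT.
Qed.

Definition g := conj_aut N n * a.
Lemma Ag : g \in Aut N. Proof. by rewrite groupM ?Aut_aut. Qed.
Lemma gE u : u \in N -> g u = a (u ^ n).
Proof. by move=> Nu; rewrite permM conj_autE ?nN. Qed.

Lemma gTk k : g @: T k = T (pi k).
Proof.
rewrite (eq_imset _ (permM _ _)) imset_comp -aT; congr (_ @: _).
rewrite (eq_in_imset (g := conjg^~ n)); last first.
  by move=> u Tu; rewrite conj_autE ?nN // (subsetP (sTN defN k)).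
have /normalP[_ nT] := nsTN defN k; rewrite -{2}(nT n nN); by [].
Qed.


Lemma gN u : u \in N -> g u \in N. Proof. exact: (Aut_closed Ag). Qed.

Lemma fcon_root j : fconnect pi (froot pi j) j.
Proof. by rewrite (fconnect_sym pi_inj) connect_root. Qed.

Lemma base_root j : base (froot pi j).
Proof. by rewrite /base (root_root (fconnect_sym pi_inj)). Qed.

Lemma nonbase_iter r k : base r -> 0 < k < m r -> ~~ base (iter k pi r).
Proof.
move=> br /andP[k0 km]; rewrite /base.
have -> : froot pi (iter k pi r) = r.
  have /rootP e : fconnect pi r (iter k pi r) by apply: fconnect_iter.
  by rewrite -(e (fconnect_sym pi_inj)); apply/eqP.
apply/eqP => e; have := @findex_iter _ pi r k km; rewrite -e findex0 => k0'.
by rewrite -k0' in k0.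
Qed.

Lemma aiterT k r u : u \in T r -> (a ^+ k) u \in T (iter k pi r).
Proof. by move=> Tu; rewrite -(iter_img aT) imset_f. Qed.

Lemma key r u k : base r -> u \in T r -> k < m r ->
  (g ^+ k.+1) u = (a ^+ k.+1) (u ^ nn r).
Proof.
move=> br Tu; elim: k => [_ | k IH km].
  by rewrite expg1 gE ?(subsetP (sTN defN r)) // (conj_n Tu) /c br expg1.
rewrite expgSr permM IH 1?ltnW //.
have Tw : (a ^+ k.+1) (u ^ nn r) \in T (iter k.+1 pi r).
  by apply: aiterT; rewrite groupJ ?nnT.
have Nw := subsetP (sTN defN _) _ Tw.
rewrite gE // (conj_n Tw) /c.
rewrite ifN ?conjg1; last by apply: nonbase_iter.
by rewrite -permM -expgSr.
Qed.

Lemma gm r u : base r -> u \in T r -> (g ^+ m r) u = F r (nn r) u.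
Proof.
move=> br Tu; have m0 : 0 < m r by apply: fingraph.order_gt0.
have km : (m r).-1 < m r by rewrite prednK.
by have := key br Tu km; rewrite prednK.
Qed.


Lemma m_dvd r : m r %| #[a].
Proof.
apply: order_dvd_iter pi_inj _; apply: (T_inj defN ntT); apply: val_inj => /=.
by rewrite -(iter_img aT) expg_order (eq_imset _ (@perm1 _)) imset_id.
Qed.

Definition E := (#[a] * q)%N.


Lemma gE_base r u : base r -> u \in T r -> (g ^+ E) u = u.
Proof.
move=> br Tu.
have FT w : w \in T r -> F r (nn r) w \in T r.
  by move=> Tw; have := amT r => e; rewrite /F -e imset_f // groupJ ?nnT.
have itF k : iter k (g ^+ m r) u = iter k (F r (nn r)) u /\ iter k (F r (nn r)) u \in T r.
  elim: k => [|k [IH1 IH2]] //=; by rewrite IH1 gm ?FT.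
have gmq : (g ^+ (m r * q)) u = u.
  rewrite expgM permX (proj1 (itF q)).
  by case/and3P: (nnP r) => _ /forallP/(_ u)/implyP/(_ Tu)/eqP.
have eE : E = (m r * q * (#[a] %/ m r))%N.
  by rewrite /E -{1}(divnK (m_dvd r)) [RHS]mulnC mulnA.
by rewrite eE expgM permX_fix.
Qed.

Lemma gE_all j u : u \in T j -> (g ^+ E) u = u.
Proof.
set r := froot pi j => Tu.
have ej : iter (findex pi r j) pi r = j by apply: iter_findex; apply: fcon_root.
move: Tu; rewrite -ej -(iter_img gTk) => /imsetP[w Tw ->].
rewrite -permM -expgD addnC expgD permM (gE_base (base_root j) Tw) //.
Qed.

Lemma gE1 : g ^+ E = 1.
Proof.
have AgE : g ^+ E \in Aut N by rewrite groupX ?Ag.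
apply: (eq_Aut (A := N)) => //.
move=> y; rewrite -(bigdprodW defN) => /prodsgP[c' Tc' ->].
rewrite perm1 -(autmE AgE) (morph_prod (autm_morphism AgE)); last first.
  by move=> i _; apply: (subsetP (sTN defN i)); apply: Tc'.
apply: eq_bigr => i _ /=; rewrite autmE (gE_all (Tc' i _)) //.
Qed.

Lemma pg : p.-elt g.
Proof.
rewrite /p_elt; apply: (@pnat_dvd _ E); first by rewrite order_dvdn gE1.
by rewrite /E pnatM part_pnat andbT; exact: pa.
Qed.


Definition Fx := [set y in N | g y == y].
Definition Fam i : {set hT} := if base i then [set u in T i | (g ^+ m i) u == u] else [set 1].
Definition Phi y : {ffun 'I_t -> hT} := [ffun i => if base i then proj T i y else 1].

Lemma fix_iter y k j : y \in Fx -> proj T (iter k pi j) y = (g ^+ k) (proj T j y).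
Proof.
case/setIdP => Ny /eqP gy; elim: k => [|k IH]; first by rewrite expg0 perm1.
rewrite iterS -{1}gy (proj_aut defN Ag pi_inj gTk _ Ny) IH.
by rewrite -permM -expgSr.
Qed.

Lemma Phi_inj : {in Fx &, injective Phi}.
Proof.
move=> y1 y2 F1 F2 e.
have N1 : y1 \in N by case/setIdP: F1.
have N2 : y2 \in N by case/setIdP: F2.
apply: (proj_inj defN ZT N1 N2) => j.
set r := froot pi j.
have ej : iter (findex pi r j) pi r = j by apply: iter_findex; apply: fcon_root.
rewrite -ej !fix_iter //.
have := congr1 (fun f : {ffun _ -> hT} => f r) e; rewrite /= !ffunE base_root => ->.
by [].
Qed.

Lemma Phi_fam y : y \in Fx -> Phi y \in family (fun i => Fam i).
Proof.
move=> Fy; have Ny : y \in N by case/setIdP: Fy.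
apply/familyP => i; rewrite ffunE /Fam; case: ifP => bi; last by rewrite inE.
rewrite inE (projT defN) //= -fix_iter // iter_order //; exact: pi_inj.
Qed.

Lemma card_Fx : (#|Fx| <= \prod_(i < t) #|Fam i|)%N.
Proof.
rewrite -(card_in_imset Phi_inj).
apply: leq_trans (subset_leq_card (_ : Phi @: Fx \subset family (fun i => Fam i))) _.
  by apply/subsetP => _ /imsetP[y Fy ->]; apply: Phi_fam.
rewrite card_family foldrE big_map big_enum /=.
by [].
Qed.


Lemma M_le_S : (M <= #|S|)%N.
Proof.
have [x _ /andP[_ Mx]] := hyp (group1 [Aut S]).
apply: leq_trans Mx _; apply: leq_trans (leq_imset_card _ _) _.
exact: leq_imset_card.
Qed.

Lemma Fam_bound i : (M * #|Fam i| <= #|S|)%N.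
Proof.
rewrite /Fam; case: ifP => bi; last by rewrite cards1 muln1 M_le_S.
have -> : [set u in T i | (g ^+ m i) u == u] = [set u in T i | F i (nn i) u == u].
  by apply/setP => u; rewrite !inE; case Tu: (u \in T i); rewrite //= gm.
by case/and3P: (nnP i).
Qed.

Lemma Fx_bound : (M ^ t * #|Fx| <= #|S| ^ t)%N.
Proof.
apply: leq_trans (leq_mul (leqnn _) card_Fx) _.
have cst k : (k ^ t = \prod_(i < t) k)%N by rewrite prod_nat_const card_ord.
rewrite cst cst -big_split /=; apply: leq_prod => i _; exact: Fam_bound.
Qed.

Lemma card_N : #|N| = (#|S| ^ t)%N.
Proof.
rewrite -(bigdprod_card defN) (eq_bigr (fun _ => #|S|)) ?prod_nat_const ?card_ord //.
move=> i _; exact: card_isog.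
Qed.

Lemma F1 : 1 \in Fx.
Proof. by rewrite /Fx inE group1 /= -(autmE Ag) morph1. Qed.

Lemma class_bound : (M ^ t <= #|g ^: Inn N|)%N.
Proof.
have cf := class_fix (ZN defN ZT) Ag.
have F0 : (0 < #|Fx|)%N by rewrite card_gt0; apply/set0Pn; exists 1; apply: F1.
rewrite -(leq_pmul2r F0); apply: leq_trans Fx_bound _.
by rewrite -card_N -cf.
Qed.

Lemma class_sub : g ^: Inn N \subset Ord (Inn N :* a) p.
Proof.
apply/subsetP => _ /imsetP[c Ic ->]; rewrite inE p_eltJ pg andbT.
rewrite mem_rcoset; rewrite Inn_morphim in Ic *.
have e : (conj_aut N n * a) ^ c * a^-1 = c^-1 * conj_aut N n * (c ^ a^-1).
  by rewrite !conjgE invgK !mulgA.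
have In : conj_aut N n \in conj_aut N @* N.
  by apply: mem_morphim; [apply: (subsetP (normG N)) |]; apply: nN.
have Ica : c ^ a^-1 \in conj_aut N @* N.
  move: Ic; rewrite morphimEsub ?normG // => /imsetP[y Ny ->].
  have Aa1 : a^-1 \in Aut N by rewrite groupV.
  have Ny' : a^-1 y \in N by apply: Aut_closed.
  by rewrite conj_aut_Aut //; apply/imsetP; exists (a^-1 y).
by rewrite /g e groupM // groupM // groupV.
Qed.

Lemma main_a : (M ^ t <= #|Ord (Inn N :* a) p|)%N.
Proof. exact: leq_trans class_bound (subset_leq_card class_sub). Qed.

End Main.

Unset Implicit Arguments.

Theorem lemma2p2 (gT hT : finGroupType) (S : {group gT}) (t p M : nat)
    (N : {group hT}) (T : 'I_t -> {group hT}) :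
  simple S -> ~~ abelian S -> 0 < t -> prime p ->
  \big[dprod/1]_(i < t) T i = N ->
  (forall i, T i \isog S) ->
  (forall b, b \in Aut S ->
     exists2 x, x \in Inn S :* b & p.-elt x && (M <= #|x ^: Inn S|)) ->
  M ^ t <= f_p N p.
Proof.
move=> simS nabS t0 pr_p defN isoT hyp.
rewrite /f_p; apply: (big_rec (fun x => M ^ t <= x)).
  have A1 : (1 : {perm hT}) \in Aut N by apply: group1.
  have p1 : p.-elt (1 : {perm hT}) by rewrite /p_elt order1.
  apply: leq_trans (main_a simS nabS defN isoT hyp A1 p1) _.
  apply: leq_trans (subset_leq_card (_ : Ord (Inn N :* 1) p \subset Inn N :* 1)) _.
    by apply/subsetP => x; rewrite inE => /andP[].
  by rewrite card_rcoset.
move=> a x /andP[Aa pa] le; rewrite leq_min le andbT.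
exact: (main_a simS nabS defN isoT hyp Aa pa).
Qed.
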